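(* Let $G=(V,E)$ be a finite undirected graph that is triangle-full and 4-clique-free. For $v\in V$ let $N[v]=\{v\}\cup\{v'\in V:\{v,v'\}\in E\}$, let $L_v=(V^*vv)^\omega\cup(V^*(V\setminus N[v]))^\omega\subseteq V^\omega$, and $L_G=\bigcap_{v\in V}L_v$. If there exists a (possibly non-deterministic) complete generalised Büchi automaton over the input alphabet $V$ with three states recognising $L_G$, then $G$ is 3-colourable.
   Context: A finite undirected graph is $G=(V,E)$ with $V$ finite and $E$ a set of 2-element subsets of $V$. A $k$-clique is a set of $k$ pairwise adjacent vertices; $G$ is triangle-full if every vertex lies in a 3-clique, and 4-clique-free if it has no 4-clique. A 3-colouring is a map $c:V\to\{1,2,3\}$ with $c(v)\ne c(v')$ whenever $\{v,v'\}\in E$. For sets $X,Y$ of letters, $(X^*Y)^\omega$ denotes infinite concatenations of words from $X^*Y$. An automaton is a tuple $(Q,\Sigma,q_{\mathrm{init}},\Delta,\Gamma,\mathrm{col},W)$ with finite state set, finite input alphabet $\Sigma$, initial state, transitions $\Delta\subseteq Q\times\Sigma\times Q$, output alphabet $\Gamma$, labelling $\mathrm{col}:\Delta\to\Gamma$, acceptance condition $W\subseteq\Gamma^\omega$. A run on $w=a_1a_2\cdots$ is a sequence $(q_0,a_1,q_1)(q_1,a_2,q_2)\cdots$ of transitions with $q_0=q_{\mathrm{init}}$, accepting if its label sequence is in $W$; the recognised language is the set of words with an accepting run. A generalised Büchi automaton with finite output colour set $C$ has $\Gamma=2^C$ and $W=\{x : \text{every } c\in C \text{ occurs in infinitely many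 letters of } x\}$. Complete: for every $(p,a)\in Q\times\Sigma$ there is at least one $q$ with $(p,a,q)\in\Delta$. *)

(* Defs.v *)
From mathcomp Require Import all_boot.
Set Implicit Arguments. Unset Strict Implicit. Unset Printing Implicit Defensive.

Definition simple_graph (V : finType) (e : rel V) : Prop :=
  symmetric e /\ irreflexive e.

Definition is_clique (V : finType) (e : rel V) (S : {set V}) : Prop :=
  {in S &, forall x y, x != y -> e x y}.

Definition triangle_full (V : finType) (e : rel V) : Prop :=
  forall v : V, exists S : {set V}, [/\ #|S| = 3, is_clique e S & v \in S].

Definition four_clique_free (V : finType) (e : rel V) : Prop :=
  forall S : {set V}, #|S| = 4 -> ~ is_clique e S.

Definition three_colourable (V : finType) (e : rel V) : Prop :=
  exists c : V -> 'I_3, forall x y, e x y -> c x != c y.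

Definition closed_nbhd (V : finType) (e : rel V) (v : V) : pred V :=
  fun x => (x == v) || e v x.

(* finite words are seq V, infinite words are nat -> V (letters a_1 a_2 ... as w 0, w 1, ...) *)
Definition segment (V : Type) (w : nat -> V) (a b : nat) : seq V :=
  [seq w i | i <- iota a (b - a)].

(* X^* Y with X = V (all letters): words of the form p ++ y with y in Y *)
Definition allstar_cat (V : Type) (Y : seq V -> Prop) (s : seq V) : Prop :=
  exists p y, s = p ++ y /\ Y y.

(* omega-power: w is an infinite concatenation of nonempty words from P *)
Definition omega_pow (V : Type) (P : seq V -> Prop) (w : nat -> V) : Prop :=
  exists f : nat -> nat, [/\ f 0 = 0, (forall k, f k < f k.+1)
                            & forall k, P (segment w (f k) (f k.+1))].

Definition L_v (V : finType) (e : rel V) (v : V) (w : nat -> V) : Prop :=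
  omega_pow (allstar_cat (fun y => y = [:: v; v])) w \/
  omega_pow (allstar_cat (fun y => exists x, y = [:: x] /\ ~~ closed_nbhd e v x)) w.

Definition L_G (V : finType) (e : rel V) (w : nat -> V) : Prop :=
  forall v : V, L_v e v w.

(* Generalised Buchi automaton with states Q, alphabet V, colour set C;
   transitions delta, labelling col : transition -> {set C} (given on all triples,
   only its values on transitions matter). *)
Record gba (Q V C : finType) := GBA {
  q_init : Q;
  delta : Q -> V -> Q -> bool;
  col : Q -> V -> Q -> {set C} }.

Definition gba_complete (Q V C : finType) (A : gba Q V C) : Prop :=
  forall (p : Q) (a : V), exists q : Q, delta A p a q.

Definition is_run (Q V C : finType) (A : gba Q V C) (w : nat -> V) (r : nat -> Q) : Prop :=
  r 0 = q_init A /\ forall i, delta A (r i) (w i) (r i.+1).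

Definition run_accepting (Q V C : finType) (A : gba Q V C) (w : nat -> V) (r : nat -> Q) : Prop :=
  forall c : C, forall N, exists i, N <= i /\ c \in col A (r i) (w i) (r i.+1).

Definition gba_accepts (Q V C : finType) (A : gba Q V C) (w : nat -> V) : Prop :=
  exists r, is_run A w r /\ run_accepting A w r.

Definition recognises (Q V C : finType) (A : gba Q V C) (L : (nat -> V) -> Prop) : Prop :=
  forall w, gba_accepts A w <-> L w.

(* Main.v *)
Require Import Defs.
From Stdlib Require Import Relations Classical IndefiniteDescription.
From mathcomp Require Import all_boot zify.
Set Implicit Arguments. Unset Strict Implicit. Unset Printing Implicit Defensive.


Section Core.
Variables (V Q : finType) (e : rel V) (d : Q -> V -> Q -> bool).
Hypothesis esymm : symmetric e.
Hypothesis eirr : irreflexive e.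
Hypothesis dcomp : forall p a, exists q, d p a q.
Hypothesis card3 : #|Q| = 3.

Definition Nb (x y : V) : bool := (y == x) || e x y.

Definition stp (x : V) (a b : Q * bool) : bool :=
  [exists y, [&& Nb x y, ~~ (a.2 && (y == x)), d a.1 y b.1 & b.2 == (y == x)]].

Definition RR x := clos_refl_trans (Q * bool) (stp x).

Definition brk (x : V) (m : Q) : Prop :=
  exists y s1, [/\ Nb x y, y != x, d m y s1 & RR x (s1, false) (m, false)].

Definition rN (x : V) (a b : Q) : bool := [exists y, Nb x y && d a y b].

Definition ZZ (x : V) (m : Q) : Prop :=
  ~ brk x m /\ exists p p', [/\ d p x m, d m x p' & clos_refl_trans Q (rN x) p' m].

Lemma three_cases (a b c : Q) : a != b -> b != c -> a != c ->
  forall z, z = a \/ z = b \/ z = c.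
Proof.
move=> ab bc ac z.
have: [set a; b; c] = [set: Q].
  apply/eqP; rewrite eqEcard subsetT cardsT card3.
  rewrite -setUA !cardsU1 cards1 !inE negb_or ab ac bc //.
move/setP/(_ z); rewrite !inE => H.
by case/orP: H => [/orP[]|] /eqP ->; tauto.
Qed.

Lemma stpI x (a b : Q * bool) y : Nb x y -> ~~ (a.2 && (y == x)) -> d a.1 y b.1 -> b.2 = (y == x) -> stp x a b.
Proof. by move=> H1 H2 H3 H4; apply/existsP; exists y; rewrite H1 H2 H3 H4 eqxx. Qed.

Lemma neq_of_e x y : e x y -> y != x.
Proof. by move=> H; apply/eqP=> E; move: H; rewrite E eirr. Qed.

Lemma side x y t q q' : e x y -> ~ brk x t -> d q y t -> d t y q' ->
  [/\ (forall z, RR x (q',false) z -> z <> (t,false)),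
      (forall f, ~ RR x (q',false) (q,f)),
      q' != t, q' != q & q != t].
Proof.
move=> exy nb dq dt.
have yx := neq_of_e exy.
have Nxy : Nb x y by rewrite /Nb exy orbT.
have S1 : forall z, RR x (q',false) z -> z <> (t,false).
  by move=> z Hz E; subst z; apply: nb; exists y, q'; split.
have S2 : forall f, ~ RR x (q',false) (q,f).
  move=> f Hf; apply: (S1 (t,false)) => //.
  apply: rt_trans Hf _; apply: rt_step; apply: (stpI (y:=y)) => //=.
    by rewrite (negbTE yx) andbF.
  by rewrite (negbTE yx).
split => //.
- by apply/eqP=> E; apply: (S1 (q',false)); [apply: rt_refl| rewrite E].
- by apply/eqP=> E; apply: (S2 false); rewrite -E; apply: rt_refl.
- apply/eqP=> E; subst q; apply: nb; exists y, t; split => //; apply: rt_refl.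
Qed.
Lemma rN_stuck x q : (forall y s, Nb x y -> d q y s -> s = q) ->
  forall a b, clos_refl_trans Q (rN x) a b -> a = q -> b = q.
Proof.
move=> H a b; elim => //.
- by move=> a0 b0 /existsP[y /andP[Ny dy]] E; subst a0; apply: H dy.
- by move=> a0 b0 c0 _ IH1 _ IH2 E; apply: IH2; apply: IH1.
Qed.

Lemma core u v t : e u v -> ZZ u t -> ZZ v t ->
  (forall w, e u w -> e v w -> False) /\ exists p, p != t /\ forall y, e u y -> d p y p.
Proof.
move=> euv [nbu [p [p' [dp dp' rp]]]] [nbv [q [q' [dq dq' rq]]]].
have evu : e v u by rewrite esymm.
have vu := neq_of_e euv.
have uv := neq_of_e evu.
have [U1 U2 Uq't Uq'q Uqt] := side euv nbu dq dq'.
have [V1 V2 Vp't Vp'p Vpt] := side evu nbv dp dp'.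
have tq : t != q by rewrite eq_sym.
have tq' : t != q' by rewrite eq_sym.
have qq' : q != q' by rewrite eq_sym.
have C3 := three_cases tq qq' tq'.
have Nuu : Nb u u by rewrite /Nb eqxx.
have Nvu : Nb v u by rewrite /Nb evu orbT.
have Nuv : Nb u v by rewrite /Nb euv orbT.
have Nvv : Nb v v by rewrite /Nb eqxx.
case: (C3 p) => [Ept|[Epq|Epq']].
- by move: Vpt; rewrite Ept eqxx.
-
  exfalso.
  have Ep' : p' = q'.
    case: (C3 p') => [E|[E|E]] //.
    + by move: Vp't; rewrite E eqxx.
    + by move: Vp'p; rewrite E Epq eqxx.
  have stuck : forall y s, Nb u y -> d q' y s -> s = q'.
    move=> y s Ny dys.
    have [Eyu|Hyu] := eqVneq y u.
    + subst y.
      have R : RR v (p',false) (s,false).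
        apply: rt_step; apply: (stpI (y:=u)) => //=; first by rewrite Ep'.
        by rewrite (negbTE uv).
      case: (C3 s) => [E|[E|E]] //.
      * by exfalso; apply: (V1 _ R); rewrite E.
      * by exfalso; apply: (V2 false); rewrite Epq -E.
    + have R : RR u (q',false) (s,false).
        apply: rt_step; apply: (stpI (y:=y)) => //=.
        by rewrite (negbTE Hyu).
      case: (C3 s) => [E|[E|E]] //.
      * by exfalso; apply: (U1 _ R); rewrite E.
      * by exfalso; apply: (U2 false); rewrite -E.
  have := rN_stuck stuck rp Ep'.
  by move=> E; move: Uq't; rewrite E eqxx.
-
  have Ep' : p' = q.
    case: (C3 p') => [E|[E|E]] //.
    + by move: Vp't; rewrite E eqxx.
    + by move: Vp'p; rewrite E Epq' eqxx.
  have RU : RR u (q',false) (t,true).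
    apply: rt_step; apply: (stpI (y:=u)) => //=; first by rewrite -Epq'.
    by rewrite eqxx.
  have RV : RR v (p',false) (t,true).
    apply: rt_step; apply: (stpI (y:=v)) => //=; first by rewrite Ep'.
    by rewrite eqxx.
  have HU : forall y s, e u y -> d t y s -> s = p.
    move=> y s euy dts.
    have yu := neq_of_e euy.
    have R : RR u (q',false) (s,false).
      apply: rt_trans RU _; apply: rt_step; apply: (stpI (y:=y)) => /=;
      by rewrite ?/Nb ?euy ?orbT ?(negbTE yu).
    case: (C3 s) => [E|[E|E]] //.
    * by exfalso; apply: (U1 _ R); rewrite E.
    * by exfalso; apply: (U2 false); rewrite -E.
    * by rewrite E Epq'.
  have HV : forall y s, e v y -> d t y s -> s = q.
    move=> y s evy dts.
    have yv := neq_of_e evy.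
    have R : RR v (p',false) (s,false).
      apply: rt_trans RV _; apply: rt_step; apply: (stpI (y:=y)) => //=;
      by rewrite ?/Nb ?evy ?orbT ?(negbTE yv).
    case: (C3 s) => [E|[E|E]] //.
    * by exfalso; apply: (V1 _ R); rewrite E.
    * by exfalso; apply: (V2 false); rewrite Epq' -E.
  split.
  + move=> w euw evw.
    have [s ds] := dcomp t w.
    have E1 := HU _ _ euw ds.
    have E2 := HV _ _ evw ds.
    by move: qq'; rewrite -E2 E1 Epq' eqxx.
  + exists p; split; first exact: Vpt.
    move=> y euy.
    have [s ds] := dcomp p y.
    have yu := neq_of_e euy.
    have R : RR u (q',false) (s,false).
      apply: rt_step; apply: (stpI (y:=y)) => //=;
      by rewrite ?/Nb ?euy ?orbT ?(negbTE yu) -?Epq'.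
    case: (C3 s) => [E|[E|E]].
    * by exfalso; apply: (U1 _ R); rewrite E.
    * by exfalso; apply: (U2 false); rewrite -E.
    * by move: ds; rewrite E Epq'.
Qed.
Lemma rt_fun (T : Type) (R : T -> T -> Prop) a b : clos_refl_trans T R a b ->
  exists n (g : nat -> T), [/\ g 0 = a, g n = b & forall i, i < n -> R (g i) (g i.+1)].
Proof.
move=> H; have {H} H := clos_rt_rt1n _ _ _ _ H; elim: H => [x|x y z Rxy _ [n [g [g0 gn gs]]]].
- by exists 0, (fun _ => x).
- exists n.+1, (fun i => if i is i'.+1 then g i' else x); split => //.
  by case=> [|i] /= Hi; [rewrite g0 | apply: gs].
Qed.

Definition breaker x m N (ys : nat -> V) (ss : nat -> Q) :=
  [/\ 0 < N, ss 0 = m, ss N = m &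
      (forall i, i < N -> d (ss i) (ys i) (ss i.+1) && Nb x (ys i))] /\
  [/\ ys 0 != x, ys N.-1 != x &
      (forall i, i.+1 < N -> ~~ ((ys i == x) && (ys i.+1 == x)))].

Lemma brk_breaker x m : brk x m -> exists N ys ss, breaker x m N ys ss.
Proof.
move=> [y0 [s1 [Ny y0x dm R]]].
have [n [g [g0 gn gs]]] := rt_fun R.
pose P i y := [&& Nb x y, ~~ ((g i).2 && (y == x)), d (g i).1 y (g i.+1).1 & (g i.+1).2 == (y == x)].
pose lt i := odflt x [pick y | P i y].
have ltP : forall i, i < n -> P i (lt i).
  move=> i Hi; rewrite /lt; case: pickP => [y Hy //|Hn].
  by have /existsP[y Hy] := gs i Hi; move: (Hn y); rewrite /P Hy.
exists n.+1, (fun i => if i is i'.+1 then lt i' else y0), (fun i => if i is i'.+1 then (g i').1 else m).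
split; split => //.
- by rewrite /= gn.
- case=> [|i] /= Hi; first by rewrite g0 dm Ny.
  by have /and4P[-> _ -> _] := ltP i Hi.
- move: ltP gn; case: n {gs} => [|n'] ltP gn //=.
  have /and4P[_ _ _ /eqP E] := ltP n' (ltnSn _).
  by rewrite gn /= in E; rewrite -E.
- case=> [|i] /= Hi; first by rewrite (negbTE y0x).
  have /and4P[_ H2 _ _] := ltP i.+1 Hi.
  have /and4P[_ _ _ /eqP E] := ltP i (ltnW Hi).
  by rewrite -E.
Qed.

Lemma mod_step j N : 0 < N ->
  (j.+1 %% N = (j %% N).+1 /\ (j %% N).+1 < N) \/ (j.+1 %% N = 0 /\ j %% N = N.-1).
Proof.
move=> N0; have Ej := divn_eq j N; have aN := ltn_pmod j N0.
set a := j %% N in Ej aN *; set q := j %/ N in Ej.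
case: (ltnP a.+1 N) => H.
- left; split => //; rewrite Ej -addnS modnMDl modn_small //.
- right; have Ea : a.+1 = N by apply/eqP; rewrite eqn_leq H aN.
  split; last by rewrite -Ea.
  by rewrite Ej -addnS Ea -mulSnr modnMl.
Qed.

Lemma padded x m N ys ss L : breaker x m N ys ss -> N %| L -> 0 < L ->
  [/\ (forall j, d (ss (j %% N)) (ys (j %% N)) (ss (j.+1 %% N)) && Nb x (ys (j %% N))),
      ss (0 %% N) = m, ss (L %% N) = m &
     [/\ ys (0 %% N) != x, ys (L.-1 %% N) != x &
         forall j, ~~ ((ys (j %% N) == x) && (ys (j.+1 %% N) == x))]].
Proof.
move=> [[N0 s0 sN st] [y0 yN nxx]] dNL L0.
have LN : L %% N = 0 by apply/eqP.
have LN1 : L.-1 %% N = N.-1.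
  case: (mod_step L.-1 N0); rewrite prednK //; last by case.
  by rewrite LN; case.
split; [|by rewrite mod0n|by rewrite LN|split; [by rewrite mod0n|by rewrite LN1|]].
- move=> j; case: (mod_step j N0) => [[-> H]|[-> E]].
  + exact: st (ltnW H).
  + rewrite s0 -sN E; have := st N.-1; rewrite prednK //; apply.
    by [].
- move=> j; case: (mod_step j N0) => [[-> H]|[_ E]].
  + exact: nxx.
  + by rewrite E (negbTE yN).
Qed.

Lemma core1 u v w t : e u v -> e u w -> e v w -> ZZ u t -> ZZ v t -> False.
Proof. by move=> euv euw evw Zu Zv; have [H _] := core euv Zu Zv; apply: H euw evw. Qed.

Lemma noshare u v t : e u v -> (exists a b, [/\ e u a, e u b & e a b]) ->
  (forall x, exists m, ZZ x m) -> ZZ u t -> ZZ v t -> False.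
Proof.
move=> euv [a [b [eua eub eab]]] Zne Zu Zv.
have [_ [p [pt loops]]] := core euv Zu Zv.
have [za Za] := Zne a.
have [zb Zb] := Zne b.
have eau : e a u by rewrite esymm.
have eba : e b a by rewrite esymm.
have ebu : e b u by rewrite esymm.
have zat : za != t.
  by apply/eqP=> E; subst za; apply: (core1 eua eub eab Zu Za).
have zbt : zb != t.
  by apply/eqP=> E; subst zb; apply: (core1 eub eua eba Zu Zb).
have zap : za != p.
  apply/eqP=> E; subst za; case: Za => nb _; apply: nb.
  exists b, p; split; [by rewrite /Nb eab orbT| exact: neq_of_e eab| exact: loops| exact: rt_refl].
have zbp : zb != p.
  apply/eqP=> E; subst zb; case: Zb => nb _; apply: nb.
  exists a, p; split; [by rewrite /Nb eba orbT| exact: neq_of_e eba| exact: loops| exact: rt_refl].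
have tp : t != p by rewrite eq_sym.
have tza : t != za by rewrite eq_sym.
have pza : p != za by rewrite eq_sym.
have Ezb : zb = za.
  case: (three_cases tp pza tza zb) => [E|[E|E]] //.
  - by move: zbt; rewrite E eqxx.
  - by move: zbp; rewrite E eqxx.
rewrite Ezb in Zb.
exact: (core1 eab eau ebu Za Zb).
Qed.
End Core.


Section Words.
Variables (V : finType).

Lemma seg_cat (w : nat -> V) a k b : a <= k <= b ->
  segment w a b = segment w a k ++ segment w k b.
Proof.
move=> /andP[ak kb]; rewrite /segment -map_cat; congr map.
have -> : b - a = (k - a) + (b - k) by lia.
by rewrite iotaD; congr (_ ++ iota _ _); lia.
Qed.

Lemma seg_size (w : nat -> V) a b : size (segment w a b) = b - a.
Proof. by rewrite /segment size_map size_iota. Qed.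

Lemma seg_nth (w : nat -> V) a b i : i < b - a -> nth (w 0) (segment w a b) i = w (a + i).
Proof. by move=> H; rewrite /segment (nth_map 0) ?size_iota // nth_iota. Qed.

Lemma allstar2 (w : nat -> V) a b c1 c2 : a + 2 <= b -> w (b-2) = c1 -> w (b-1) = c2 ->
  allstar_cat (fun y => y = [:: c1; c2]) (segment w a b).
Proof.
move=> H E1 E2; exists (segment w a (b-2)), [:: c1; c2]; split => //.
rewrite (@seg_cat w a (b-2) b); last by lia.
congr (_ ++ _); rewrite /segment.
have -> : b - (b - 2) = 2 by lia.
rewrite /= -E1 -E2; congr [:: _; w _]; lia.
Qed.

Lemma allstar1 (w : nat -> V) (P : V -> Prop) a b : a < b -> P (w (b-1)) ->
  allstar_cat (fun y => exists x, y = [:: x] /\ P x) (segment w a b).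
Proof.
move=> H E; exists (segment w a (b-1)), [:: w (b-1)]; split; last by exists (w (b-1)).
rewrite (@seg_cat w a (b-1) b); last by lia.
congr (_ ++ _); rewrite /segment.
have -> : b - (b - 1) = 1 by lia.
by [].
Qed.

Lemma allstar2_inv (w : nat -> V) a b c1 c2 :
  allstar_cat (fun y => y = [:: c1; c2]) (segment w a b) ->
  [/\ a + 2 <= b, w (b-2) = c1 & w (b-1) = c2].
Proof.
move=> [p [y [E Hy]]]; subst y.
have Hs : b - a = size p + 2 by rewrite -(seg_size w a b) E size_cat.
have N1 : nth (w 0) (segment w a b) (size p) = c1 by rewrite E nth_cat ltnn subnn.
have N2 : nth (w 0) (segment w a b) (size p).+1 = c2 by rewrite E nth_cat ltnNge leqnSn /= subSn // subnn.
rewrite seg_nth in N1; last by lia.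
rewrite seg_nth in N2; last by lia.
split; first by lia.
- by rewrite -N1; congr w; lia.
- by rewrite -N2; congr w; lia.
Qed.

Lemma allstar1_inv (w : nat -> V) (P : V -> Prop) a b :
  allstar_cat (fun y => exists x, y = [:: x] /\ P x) (segment w a b) -> a < b /\ P (w (b-1)).
Proof.
move=> [p [y [E [x [Ey Px]]]]]; subst y.
have Hs : b - a = size p + 1 by rewrite -(seg_size w a b) E size_cat.
have N1 : nth (w 0) (segment w a b) (size p) = x by rewrite E nth_cat ltnn subnn.
rewrite seg_nth in N1; last by lia.
split; first by lia.
have -> : b - 1 = a + size p by lia.
by rewrite N1.
Qed.

Lemma f_ge (f : nat -> nat) : (forall k, f k < f k.+1) -> forall k, k <= f k.
Proof. by move=> H; elim=> // k IH; apply: leq_ltn_trans IH (H k). Qed.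

Lemma omega_off (w : nat -> V) (P : seq V -> Prop) o n : 0 < n -> 0 < o ->
  (forall k, P (segment w (if k is k'.+1 then o + n * k' else 0) (o + n * k))) -> omega_pow P w.
Proof.
move=> n0 o0 H; exists (fun k => if k is k'.+1 then o + n * k' else 0); split => //.
- by case=> [|k] /=; rewrite ?mulnS; lia.
Qed.

Lemma notLv (e : rel V) (w : nat -> V) v N : (forall i, closed_nbhd e v (w i)) ->
  (forall i, N <= i -> w i = v -> w i.+1 = v -> False) -> ~ L_v e v w.
Proof.
move=> HN Hxx [[f [f0 finc Hf]] | [f [f0 finc Hf]]].
- have [H2 E1 E2] := allstar2_inv (Hf N.+1).
  have Hb := f_ge finc N.+2.
  apply: (Hxx (f N.+2 - 2)); first by lia.
  + exact: E1.
  + by rewrite -E2; congr w; lia.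
- have [_ Hp] := allstar1_inv (P := fun x => ~~ closed_nbhd e v x) (Hf 0).
  by move: Hp; rewrite HN.
Qed.

Definition Yw (x a b : V) (i : nat) : V := nth x [:: x; x; a; a; b; b] (i %% 6).

Lemma Yw_at x a b k j : j < 6 -> Yw x a b (k * 6 + j) = nth x [:: x; x; a; a; b; b] j.
Proof. by move=> H; rewrite /Yw modnMDl modn_small. Qed.

Lemma Yw_LG (e : rel V) (x a b : V) : simple_graph e -> four_clique_free e ->
  x != a -> x != b -> a != b -> e x a -> e x b -> e a b -> L_G e (Yw x a b).
Proof.
move=> [esy eir] h4 xa xb ab exa exb eab v.
have eax : e a x by rewrite esy.
have ebx : e b x by rewrite esy.
have eba : e b a by rewrite esy.
have dbl : forall j c, j < 5 -> nth x [:: x; x; a; a; b; b] j = c ->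
    nth x [:: x; x; a; a; b; b] j.+1 = c -> L_v e c (Yw x a b).
  move=> j c Hj E1 E2; left.
  apply: (omega_off (o := j.+2) (n := 6)) => //.
  move=> k; apply: allstar2.
  - by case: k => [|k] /=; lia.
  - have -> : j.+2 + 6 * k - 2 = k * 6 + j by lia.
    by rewrite Yw_at //; lia.
  - have -> : j.+2 + 6 * k - 1 = k * 6 + j.+1 by lia.
    by rewrite Yw_at //; lia.
have sgl : forall j c, j < 6 -> nth x [:: x; x; a; a; b; b] j = c ->
    ~~ closed_nbhd e v c -> L_v e v (Yw x a b).
  move=> j c Hj E1 Hc; right.
  apply: (omega_off (o := j.+1) (n := 6)) => //.
  move=> k; apply: (allstar1 (P := fun y => ~~ closed_nbhd e v y)).
  - by case: k => [|k] /=; lia.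
  - have -> : j.+1 + 6 * k - 1 = k * 6 + j by lia.
    by rewrite Yw_at // E1.
have [->|vx] := eqVneq v x; first exact: (dbl 0).
have [->|va] := eqVneq v a; first exact: (dbl 2).
have [->|vb] := eqVneq v b; first exact: (dbl 4).
have cn : forall c, c != v -> ~~ e v c -> ~~ closed_nbhd e v c.
  by move=> c cv nc; rewrite /closed_nbhd negb_or cv nc.
have [evx|nx] := boolP (e v x); last by apply: (sgl 0 x) => //; apply: cn; rewrite // eq_sym.
have [eva|na] := boolP (e v a); last by apply: (sgl 2 a) => //; apply: cn; rewrite // eq_sym.
have [evb|nb] := boolP (e v b); last by apply: (sgl 4 b) => //; apply: cn; rewrite // eq_sym.
exfalso; apply: (h4 (v |: (x |: (a |: [set b])))).
  rewrite !cardsU1 cards1 !inE !negb_or vx va vb xa xb ab //.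
have exv : e x v by rewrite esy.
have eav : e a v by rewrite esy.
have ebv : e b v by rewrite esy.
move=> y z; rewrite !inE => /or4P[]/eqP-> /or4P[]/eqP->; rewrite ?eqxx //.
Qed.
End Words.

Section Ins.
Variables (Q V C : finType) (A : gba Q V C) (w : nat -> V) (r : nat -> Q).
Variables (L0 P0 o0 Lm : nat) (ys : nat -> nat -> V) (ss : nat -> nat -> Q).
Hypothesis Hrun : is_run A w r.
Hypothesis Hacc : run_accepting A w r.
Hypothesis Lm0 : 0 < Lm.
Hypothesis Ho0 : o0 < P0.
Hypothesis Hsteps : forall k j, j < Lm -> delta A (ss k j) (ys k j) (ss k j.+1).
Hypothesis Hs0 : forall k, ss k 0 = r (L0 + k * P0 + o0).
Hypothesis HsL : forall k, ss k Lm = r (L0 + k * P0 + o0).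

Definition PP := P0 + Lm.
Definition bs k := L0 + k * P0.
Definition wl k o := if o < o0 then w (bs k + o) else if o < o0 + Lm then ys k (o - o0)
                     else w (bs k + o - Lm).
Definition rl k o := if o <= o0 then r (bs k + o) else if o < o0 + Lm then ss k (o - o0)
                     else r (bs k + o - Lm).
Definition w' i := if i < L0 then w i else wl ((i - L0) %/ PP) ((i - L0) %% PP).
Definition r' i := if i < L0 then r i else rl ((i - L0) %/ PP) ((i - L0) %% PP).

Lemma PP0 : 0 < PP. Proof. rewrite /PP; lia. Qed.

Lemma at_dm k o : o < PP -> (L0 + k * PP + o - L0) %/ PP = k /\ (L0 + k * PP + o - L0) %% PP = o.
Proof.
move=> H; have -> : L0 + k * PP + o - L0 = k * PP + o by lia.
by rewrite divnMDl ?PP0 // divn_small // addn0 modnMDl modn_small.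
Qed.

Lemma w'_at k o : o < PP -> w' (L0 + k * PP + o) = wl k o.
Proof.
move=> H; have [E1 E2] := at_dm k H; rewrite /w' E1 E2.
have -> : (L0 + k * PP + o < L0) = false by apply/negbTE; rewrite -leqNgt; lia.
by [].
Qed.

Lemma r'_at k o : o < PP -> r' (L0 + k * PP + o) = rl k o.
Proof.
move=> H; have [E1 E2] := at_dm k H; rewrite /r' E1 E2.
have -> : (L0 + k * PP + o < L0) = false by apply/negbTE; rewrite -leqNgt; lia.
by [].
Qed.

Lemma decomp i : L0 <= i -> i = L0 + ((i - L0) %/ PP) * PP + (i - L0) %% PP /\ (i - L0) %% PP < PP.
Proof.
move=> H; split; last by rewrite ltn_mod PP0.
by rewrite -addnA -divn_eq; lia.
Qed.

Lemma step_in k o : o < PP ->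
  delta A (rl k o) (wl k o) (if o.+1 < PP then rl k o.+1 else rl k.+1 0).
Proof.
move=> Ho; have [_ Hst] := Hrun.
rewrite /rl /wl /PP in Ho *.
have [H1|H1] := boolP (o < o0).
- have -> : o <= o0 by lia.
  have -> : o.+1 < P0 + Lm by lia.
  by rewrite addnS; apply: Hst.
have [H2|H2] := boolP (o < o0 + Lm).
- have -> : o.+1 < P0 + Lm by lia.
  have E : ss k (o - o0) = (if o <= o0 then r (bs k + o) else ss k (o - o0)).
    case: ifP => // H3; have -> : o = o0 by lia.
    by rewrite subnn Hs0.
  rewrite -E.
  have [H4|H4] := boolP (o.+1 < o0 + Lm).
  + by rewrite subSn; [apply: Hsteps|]; lia.
  + have -> : bs k + o.+1 - Lm = L0 + k * P0 + o0 by rewrite /bs; lia.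
    rewrite -HsL; have -> : Lm = (o - o0).+1 by lia.
    by apply: Hsteps; lia.
- have -> : (o <= o0) = false by apply/negbTE; lia.
  have [H4|H4] := boolP (o.+1 < P0 + Lm).
    have -> : (o.+1 < o0 + Lm) = false by apply/negbTE; lia.
    have -> : bs k + o.+1 - Lm = (bs k + o - Lm).+1 by lia.
    by apply: Hst.
  + rewrite leq0n addn0.
    have -> : bs k.+1 = (bs k + o - Lm).+1 by rewrite /bs mulSn; lia.
    by apply: Hst.
Qed.

Lemma run' : is_run A w' r'.
Proof.
have [Hr0 Hst] := Hrun.
split.
- rewrite /r'; case: ifP => // H.
  have E : L0 = 0 by lia.
  by rewrite sub0n div0n mod0n /rl leq0n /bs mul0n !addn0 E.
move=> i.
case: (ltnP i L0) => Hi.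
- rewrite /w' /r' Hi.
  case: (ltnP i.+1 L0) => Hi1; first exact: Hst.
  have E : i.+1 = L0 by lia.
  rewrite E subnn div0n mod0n /rl leq0n /bs mul0n addn0 -E.
  by rewrite addn0; exact: Hst.
- have [E Hlt] := decomp Hi.
  set k := (i - L0) %/ PP in E *; set o := (i - L0) %% PP in E Hlt *.
  rewrite E r'_at // w'_at //.
  have := step_in k Hlt.
  case: ifP => H.
  + by rewrite -addnS r'_at.
    have Eo : o.+1 = PP by move/negbT: H; rewrite -leqNgt; lia.
    have -> : (L0 + k * PP + o).+1 = L0 + k.+1 * PP + 0 by rewrite mulSn; lia.
    by rewrite r'_at // PP0.
Qed.

Lemma rl_lo k o : o <= o0 -> rl k o = r (bs k + o).
Proof. by move=> H; rewrite /rl H. Qed.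
Lemma rl_hi k o : o0 + Lm <= o -> rl k o = r (bs k + o - Lm).
Proof.
move=> H; rewrite /rl.
have -> : (o <= o0) = false by apply/negbTE; lia.
have -> : (o < o0 + Lm) = false by apply/negbTE; lia.
by [].
Qed.
Lemma wl_lo k o : o < o0 -> wl k o = w (bs k + o).
Proof. by move=> H; rewrite /wl H. Qed.
Lemma wl_hi k o : o0 + Lm <= o -> wl k o = w (bs k + o - Lm).
Proof.
move=> H; rewrite /wl.
have -> : (o < o0) = false by apply/negbTE; lia.
have -> : (o < o0 + Lm) = false by apply/negbTE; lia.
by [].
Qed.

Lemma acc' : run_accepting A w' r'.
Proof.
move=> c N.
have [j [Hj Hc]] := Hacc c (N + L0).
have P00 : 0 < P0 by lia.
set k := (j - L0) %/ P0; set o := (j - L0) %% P0.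
have Ej : j = bs k + o by rewrite /bs -addnA -divn_eq; lia.
have Ho : o < P0 by rewrite ltn_mod.
have kP : k * P0 <= k * PP by rewrite leq_mul2l /PP leq_addr orbT.
have [H1|H1] := boolP (o < o0).
- exists (L0 + k * PP + o); split.
    by move: Ej; rewrite /bs; lia.
  rewrite r'_at ?w'_at; try (rewrite /PP; lia).
  rewrite rl_lo ?wl_lo; try lia.
  have -> : (L0 + k * PP + o).+1 = L0 + k * PP + o.+1 by lia.
  rewrite r'_at ?rl_lo; try (rewrite /PP; lia).
  by rewrite addnS -Ej.
- exists (L0 + k * PP + (o + Lm)); split.
    by move: Ej; rewrite /bs; lia.
  rewrite r'_at ?w'_at; try (rewrite /PP; lia).
  rewrite rl_hi ?wl_hi; try lia.
  have -> : bs k + (o + Lm) - Lm = j by lia.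
  have [H2|H2] := boolP ((o + Lm).+1 < PP).
  + have -> : (L0 + k * PP + (o + Lm)).+1 = L0 + k * PP + (o + Lm).+1 by lia.
    rewrite r'_at ?rl_hi; try lia.
    by have -> : bs k + (o + Lm).+1 - Lm = j.+1 by lia.
  + have Eo : o.+1 = P0 by move: H2; rewrite /PP -leqNgt; lia.
    have -> : (L0 + k * PP + (o + Lm)).+1 = L0 + k.+1 * PP + 0 by rewrite mulSn /PP; lia.
    rewrite r'_at ?rl_lo; try (rewrite /PP; lia).
    by have -> : bs k.+1 + 0 = j.+1 by rewrite /bs mulSn; lia.
Qed.

Lemma ins_accepts : gba_accepts A w'.
Proof. exists r'; split; [exact: run' | exact: acc']. Qed.
End Ins.


Lemma recurrent (T : finType) (g : nat -> T) :
  exists K0, forall k, K0 <= k -> forall M, exists k', M <= k' /\ g k' = g k.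
Proof.
have H : forall l : seq T, exists K, forall k, K <= k -> g k \in l ->
    forall M, exists k', M <= k' /\ g k' = g k.
  elim => [|s l [K IH]]; first by exists 0.
  case: (classic (forall M, exists k', M <= k' /\ g k' = s)) => Hs.
  - exists K => k Hk; rewrite inE => /orP[/eqP E|Hl]; first by rewrite E.
    exact: IH.
  - have [B HB] : exists B, forall k, B <= k -> g k != s.
      apply: NNPP => Hn; apply: Hs => M; apply: NNPP => H'; apply: Hn.
      exists M => k Hk; apply/eqP => E; apply: H'; by exists k.
    exists (maxn K B) => k Hk; rewrite inE => /orP[/eqP E|Hl].
    + by move: (HB k); rewrite E eqxx; move=> /(_ (leq_trans (leq_maxr _ _) Hk)).
    + by apply: IH => //; apply: leq_trans Hk; apply: leq_maxl.
have [K HK] := H (enum T).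
by exists K => k Hk; apply: HK => //; rewrite mem_enum.
Qed.

Lemma run_reach (V Q C : finType) (e : rel V) (A : gba Q V C) (w : nat -> V) (r : nat -> Q) x :
  is_run A w r -> (forall i, Nb e x (w i)) ->
  forall i n, clos_refl_trans Q (rN e (delta A) x) (r i) (r (i + n)).
Proof.
move=> [_ rst] Hn i; elim => [|n IH]; first by rewrite addn0; apply: rt_refl.
apply: rt_trans IH _; apply: rt_step; apply/existsP; exists (w (i + n)).
by rewrite Hn addnS rst.
Qed.

Section Main.
Variables (V Q C : finType) (e : rel V) (A : gba Q V C).
Hypothesis hsg : simple_graph e.
Hypothesis h4 : four_clique_free e.
Hypothesis hrec : recognises A (L_G e).

Lemma Z_ne x a b : x != a -> x != b -> a != b -> e x a -> e x b -> e a b ->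
  exists m, ZZ e (delta A) x m.
Proof.
move=> xa xb ab exa exb eab.
apply: NNPP => Hne.
pose Y := Yw x a b.
have LY : L_G e Y := Yw_LG hsg h4 xa xb ab exa exb eab.
have [r [Hrun racc]] := (hrec Y).2 LY.
have [r0 rst] := Hrun.
have Ynb : forall i, Nb e x (Y i).
  move=> i; rewrite /Y /Yw; have := ltn_pmod i (isT : 0 < 6).
  by case: (i %% 6) => [|[|[|[|[|[|n]]]]]] //= _; rewrite /Nb ?eqxx ?exa ?exb ?orbT.
have Yk : forall k j, j < 6 -> Y (k * 6 + j) = nth x [:: x; x; a; a; b; b] j.
  by move=> k j Hj; apply: Yw_at.
pose g k := r (k * 6 + 1).
have [K0 HK] := recurrent g.
have Hbrk : forall k, K0 <= k -> brk e (delta A) x (g k).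
  move=> k Hk; apply: NNPP => nb; apply: Hne; exists (g k); split => //.
  exists (r (k * 6)), (r (k * 6 + 2)); split.
  - have E : Y (k * 6) = x by have := Yk k 0 isT; rewrite addn0.
    by have := rst (k * 6); rewrite E /g addn1.
  - by have := rst (k * 6 + 1); rewrite Yk // /g -addnS.
  - have [k' [Hk' Eg]] := HK k Hk k.+1.
    rewrite -Eg /g.
    have -> : k' * 6 + 1 = k * 6 + 2 + (k' * 6 + 1 - (k * 6 + 2)) by lia.
    exact: run_reach.
have HB : forall m, exists t : nat * (nat -> V) * (nat -> Q),
    0 < t.1.1 /\ (brk e (delta A) x m -> breaker e (delta A) x m t.1.1 t.1.2 t.2).
  move=> m; case: (classic (brk e (delta A) x m)) => Hm.
  - have [N [ys [ss Hb]]] := brk_breaker Hm.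
    by exists (N, ys, ss) => /=; split => //; case: Hb => [[]].
  - by exists (1, fun _ => x, fun _ => m); split.
pose T m := sval (constructive_indefinite_description _ (HB m)).
have TP : forall m, 0 < (T m).1.1 /\
    (brk e (delta A) x m -> breaker e (delta A) x m (T m).1.1 (T m).1.2 (T m).2).
  by move=> m; rewrite /T; case: constructive_indefinite_description.
pose Nf m := (T m).1.1.
pose Lm := \prod_(m : Q) Nf m.
have Lm0 : 0 < Lm by apply: prodn_gt0 => m; case: (TP m).
have dvL : forall m, Nf m %| Lm by move=> m; rewrite /Lm (bigD1 m) //= dvdn_mulr.
pose mk k := g (K0 + k).
have Pk := fun k => padded (proj2 (TP (mk k)) (Hbrk _ (leq_addr k K0))) (dvL (mk k)) Lm0.
pose ys k j := (T (mk k)).1.2 (j %% Nf (mk k)).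
pose ss k j := (T (mk k)).2 (j %% Nf (mk k)).
have Acc : gba_accepts A (w' Y (K0 * 6) 6 1 Lm ys).
  apply: (ins_accepts (r := r) (ss := ss)) => //.
  - by move=> k j _; case: (Pk k) => H _ _ _; case/andP: (H j).
  - by move=> k; case: (Pk k) => _ H _ _; rewrite /ss H /mk /g; congr r; lia.
  - by move=> k; case: (Pk k) => _ _ H _; rewrite /ss H /mk /g; congr r; lia.
have LG' := (hrec _).1 Acc.
apply: (notLv (N := K0 * 6) _ _ (LG' x)).
- move=> i; rewrite /w' /wl.
  case: ifP => _; first exact: Ynb.
  case: ifP => _; first exact: Ynb.
  case: ifP => _; last exact: Ynb.
  by case: (Pk ((i - K0 * 6) %/ PP 6 Lm)) => H _ _ _; case/andP: (H ((i - K0 * 6) %% PP 6 Lm - 1)).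
- move=> i Hi E1 E2.
  have [Ei Ho] := decomp (L0 := K0 * 6) (o0 := 1) Lm0 (isT : 1 < 6) Hi.
  set k := (i - K0 * 6) %/ PP 6 Lm in Ei Ho.
  set o := (i - K0 * 6) %% PP 6 Lm in Ei Ho.
  rewrite Ei (w'_at Y (K0 * 6) (P0 := 6) (o0 := 1) ys Lm0 isT k Ho) in E1.
  have PPpos : 0 < PP 6 Lm by rewrite /PP; lia.
  have E2' : (if o.+1 < PP 6 Lm then wl Y (K0 * 6) 6 1 Lm ys k o.+1
              else wl Y (K0 * 6) 6 1 Lm ys k.+1 0) = x.
    case: ifP => H; rewrite Ei in E2.
    + by rewrite -(w'_at Y (K0 * 6) (P0 := 6) (o0 := 1) ys Lm0 isT k H) addnS.
    + have Eo : o.+1 = PP 6 Lm by move/negbT: H; rewrite -leqNgt; lia.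
      have E3 : (K0 * 6 + k * PP 6 Lm + o).+1 = K0 * 6 + k.+1 * PP 6 Lm + 0 by rewrite mulSn; lia.
      by rewrite -(w'_at Y (K0 * 6) (P0 := 6) (o0 := 1) ys Lm0 isT k.+1 PPpos) -E3.
  clear E2.
  have [y0 yL nxx] : [/\ ys k 0 != x, ys k Lm.-1 != x &
      forall j, ~~ ((ys k j == x) && (ys k j.+1 == x))].
    by case: (Pk k) => _ _ _ [H1 H2 H3]; split.
  have bsE : forall t, bs (K0 * 6) 6 k + t = (K0 + k) * 6 + t by move=> t; rewrite /bs mulnDl.
  have [o0|o0] := eqVneq o 0.
  + rewrite o0 /= in E2'; rewrite /wl /= in E2'.
    rewrite (_ : 1 < 1 + Lm) ?subnn in E2'; last by lia.
    by move: y0; rewrite E2' eqxx.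
  have [oL|oL] := boolP (o < 1 + Lm).
  + have o1 : (o < 1) = false by apply/negbTE; rewrite -leqNgt lt0n.
    rewrite /wl o1 oL in E1.
    have [oL'|oL'] := boolP (o.+1 < 1 + Lm).
    * rewrite (_ : o.+1 < PP 6 Lm) /wl ?oL' /= in E2'; last by rewrite /PP; lia.
      have := nxx (o - 1); rewrite E1 (_ : (o - 1).+1 = o.+1 - 1); last by lia.
      by rewrite E2' eqxx.
    * have Eo : o = Lm by lia.
      by move: yL; rewrite -E1 Eo subn1 eqxx.
  + have WH := wl_hi Y (K0 * 6) (P0 := 6) (o0 := 1) ys Lm0 isT k.
    rewrite WH in E1; last by lia.
    have Et : bs (K0 * 6) 6 k + o - Lm = (K0 + k) * 6 + (o - Lm) by rewrite bsE; lia.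
    rewrite Et in E1.
    have [t1|t1] := eqVneq (o - Lm) 1.
    * rewrite (_ : o.+1 < PP 6 Lm) in E2'; last by rewrite /PP; lia.
      rewrite WH in E2'; last by lia.
      have Et2 : bs (K0 * 6) 6 k + o.+1 - Lm = (K0 + k) * 6 + 2 by rewrite bsE; lia.
      by move: xa; rewrite Et2 Yk // in E2'; rewrite -E2' eqxx.
    * have Ht : o - Lm < 6 by rewrite /PP in Ho; lia.
      have Ht1 : 1 < o - Lm by lia.
      rewrite Yk // in E1; move: E1 Ht Ht1.
      case: (o - Lm) => [|[|[|[|[|[|t]]]]]] //= E _ _.
      - by move: xa; rewrite E eqxx.
      - by move: xa; rewrite E eqxx.
      - by move: xb; rewrite E eqxx.
      - by move: xb; rewrite E eqxx.
Qed.
End Main.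

Unset Implicit Arguments.
Theorem lemma45 (V : finType) (e : rel V) :
  simple_graph e -> triangle_full e -> four_clique_free e ->
  (exists (Q C : finType) (A : gba Q V C),
      #|Q| = 3 /\ gba_complete A /\ recognises A (L_G e)) ->
  three_colourable e.
Proof.
move=> hsg htf h4 [Q [C [A [card3 [hcomp hrec]]]]].
have [esy eir] := hsg.
have tri : forall x, exists a b, [/\ x != a, x != b & a != b] /\ [/\ e x a, e x b & e a b].
  move=> x; have [S [cS cl xS]] := htf x.
  have : #|S :\ x| == 2 by move: cS; rewrite (cardsD1 x S) xS => /eqP; rewrite eqSS.
  move/cards2P => [a [b [ab E]]].
  have : a \in S :\ x by rewrite E !inE eqxx.
  have : b \in S :\ x by rewrite E !inE eqxx orbT.
  rewrite !inE => /andP[bx bS] /andP[ax aS].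
  have xa : x != a by rewrite eq_sym.
  have xb : x != b by rewrite eq_sym.
  exists a, b; split; split => //.
  - exact: cl.
  - exact: cl.
  - exact: cl.
have Zne : forall x, exists m, ZZ e (delta A) x m.
  move=> x; have [a [b [[xa xb ab] [exa exb eab]]]] := tri x.
  exact: (Z_ne hsg h4 hrec xa xb ab exa exb eab).
have key : forall u v t, e u v -> ZZ e (delta A) u t -> ZZ e (delta A) v t -> False.
  move=> u v t euv Zu Zv.
  have [a [b [_ [eua eub eab]]]] := tri u.
  apply: (noshare esy eir hcomp card3 euv _ Zne Zu Zv).
  by exists a, b; split.
pose c x := sval (constructive_indefinite_description _ (Zne x)).
have cP : forall x, ZZ e (delta A) x (c x).
  by move=> x; rewrite /c; case: constructive_indefinite_description.
exists (fun x => cast_ord card3 (enum_rank (c x))).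
move=> x y exy; apply/eqP => E.
have Ec : c x = c y by apply: enum_rank_inj; apply: (cast_ord_inj E).
by apply: (key x y (c x) exy (cP x)); rewrite Ec; apply: cP.
Qed.
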